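(* For $n\geq0$ let $T_n$ be the total number of lattice points lying on the $x$-axis, summed over all symmetric Dyck paths of length $2n$, and let $d_n$ be the number of such paths. Let $C(x)=\frac{1-\sqrt{1-4x}}{2x}$, $B(x)=\frac{1}{\sqrt{1-4x}}$, and $C_m=\frac{1}{m+1}\binom{2m}{m}$. Then $$\sum_{n\geq0}T_nx^n=2\,C(x^2)\cdot\frac{1}{2x}\left(\sqrt{\frac{1+2x}{1-2x}}-1\right)-C(x^2)=1+2x+5x^2+8x^3+18x^4+30x^5+65x^6+112x^7+\cdots.$$ Moreover: $\sum_{m\geq0}T_{2m}x^{2m}=C(x^2)\left[2B(x^2)-1\right]$ and the average number of points on the $x$-axis for $n=2m$ is $\frac{T_{2m}}{d_{2m}}=\frac{\binom{2m+2}{m+1}-C_m}{\binom{2m}{m}}=\frac{4m+1}{m+1}\to4$; and $\sum_{m\geq0}T_{2m+1}x^{2m+1}=2xB(x^2)C(x^2)^2$ and for $n=2m+1$ the average is $\frac{T_{2m+1}}{d_{2m+1}}=\frac{2\binom{2m+2}{m}}{\binom{2m+1}{m}}=\frac{4(m+1)}{m+2}\to4$ as $m\to\infty$.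
   Context: A Dyck path of length $2n$ is a lattice path from $(0,0)$ to $(2n,0)$ with steps $U=(1,1)$, $D=(1,-1)$ never going below the $x$-axis. It is symmetric if it is invariant under reflection in the line $x=n$ (its $i$-th step is $U$ iff its $(2n+1-i)$-th step is $D$). The points on the $x$-axis of a path are its vertices with $y$-coordinate $0$, including both endpoints. *)

(* Defs.v *)
From Stdlib Require Import Reals ZArith Arith List Bool.
From Coquelicot Require Import Coquelicot.
Import ListNotations.
Open Scope R_scope.

(* A path is a word over {U,D}; true = U = (1,1), false = D = (1,-1). *)
Fixpoint words (k : nat) : list (list bool) :=
  match k with
  | O => [[]]
  | S k' => flat_map (fun w => [true :: w; false :: w]) (words k')
  end.

Fixpoint heights (h : Z) (p : list bool) : list Z :=
  match p with
  | [] => []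
  | b :: p' => let h' := (if b then h + 1 else h - 1)%Z in h' :: heights h' p'
  end.

Definition vertex_heights (p : list bool) : list Z := 0%Z :: heights 0 p.

Definition is_dyck (p : list bool) : bool :=
  forallb (fun h => Z.leb 0 h) (vertex_heights p) &&
  Z.eqb (last (vertex_heights p) 0%Z) 0.

(* symmetric path of length 2n: the i-th step (1-based) is U iff the
   (2n+1-i)-th step is D; with 0-based index j: p_j = negb p_(2n-1-j). *)
Definition is_symmetric (n : nat) (p : list bool) : bool :=
  Nat.eqb (length p) (2 * n) &&
  forallb (fun j => Bool.eqb (nth j p false) (negb (nth (2 * n - 1 - j) p false)))
          (seq 0 (2 * n)).

Definition sym_dyck (n : nat) : list (list bool) :=
  filter (fun p => is_dyck p && is_symmetric n p) (words (2 * n)).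

Definition axis_points (p : list bool) : nat :=
  count_occ Z.eq_dec (vertex_heights p) 0%Z.

Definition d (n : nat) : nat := length (sym_dyck n).
Definition T (n : nat) : nat := fold_right Nat.add 0%nat (map axis_points (sym_dyck n)).

Fixpoint binom (n k : nat) : nat :=
  match n, k with
  | _, O => 1%nat
  | O, S _ => 0%nat
  | S n', S k' => (binom n' k' + binom n' k)%nat
  end.

Definition catalan (m : nat) : R := INR (binom (2 * m) m) / (INR m + 1).

Definition Cgf (y : R) : R := (1 - sqrt (1 - 4 * y)) / (2 * y).
Definition Bgf (y : R) : R := 1 / sqrt (1 - 4 * y).

(* Main.v *)
Require Import Defs.
From Stdlib Require Import Reals ZArith Arith List Bool Lia Lra.
From Coquelicot Require Import Coquelicot.
Import ListNotations.

Open Scope nat_scope.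

Definition S_ {A} (L : list A) (g : A -> nat) : nat := fold_right Nat.add 0 (map g L).

Lemma S_app {A} (L1 L2 : list A) g : S_ (L1 ++ L2) g = S_ L1 g + S_ L2 g.
Proof. induction L1; simpl; unfold S_ in *; simpl; auto. rewrite IHL1; lia. Qed.

Lemma S_ext_in {A} (L : list A) f g : (forall x, In x L -> f x = g x) -> S_ L f = S_ L g.
Proof.
  induction L; intros H; unfold S_ in *; simpl; [reflexivity|].
  rewrite H by (left; reflexivity). f_equal. apply IHL. intros; apply H; right; auto.
Qed.

Lemma S_add {A} (L : list A) f g : S_ L (fun x => f x + g x) = S_ L f + S_ L g.
Proof. induction L as [|a L IHL]; unfold S_ in *; simpl; [lia|rewrite IHL; lia]. Qed.

Lemma S_mul {A} (L : list A) c f : S_ L (fun x => c * f x) = c * S_ L f.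
Proof. induction L as [|a L IHL]; unfold S_ in *; simpl; [lia|rewrite IHL; lia]. Qed.

Lemma S_filter {A} (L : list A) c f :
  fold_right Nat.add 0 (map f (filter c L)) = S_ L (fun x => if c x then f x else 0).
Proof. induction L as [|a L IHL]; unfold S_ in *; simpl; auto. destruct (c a); simpl; rewrite IHL; auto. Qed.

Lemma S_words_succ k g : S_ (words (S k)) g = S_ (words k) (fun w => g (true :: w) + g (false :: w)).
Proof. simpl. induction (words k); unfold S_ in *; simpl; auto. rewrite IHl; lia. Qed.

Lemma S_words_app a b g : S_ (words (a + b)) g = S_ (words a) (fun w1 => S_ (words b) (fun w2 => g (w1 ++ w2))).
Proof.
  revert g; induction a; intro g.
  - simpl. unfold S_ at 2. simpl. rewrite Nat.add_0_r. reflexivity.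
  - change (S a + b) with (S (a + b)). rewrite S_words_succ, IHa, S_words_succ.
    apply S_ext_in. intros w _. rewrite <- S_add. reflexivity.
Qed.

Lemma words_length k w : In w (words k) -> length w = k.
Proof.
  revert w; induction k; simpl; intros w H.
  - destruct H as [<-|[]]; auto.
  - apply in_flat_map in H. destruct H as [v [Hv Hw]]. simpl in Hw.
    destruct Hw as [<-|[<-|[]]]; simpl; f_equal; auto.
Qed.

Lemma S_words_single k v c : length v = k ->
  S_ (words k) (fun w => if list_eq_dec bool_dec w v then c else 0) = c.
Proof.
  revert v; induction k; intros v Hv.
  - destruct v; [|discriminate]. unfold S_; simpl. destruct (list_eq_dec bool_dec [] []); [lia|congruence].
  - destruct v as [|b v]; [discriminate|]. simpl in Hv. injection Hv as Hv.
    rewrite S_words_succ. transitivity (S_ (words k) (fun w => if list_eq_dec bool_dec w v then c else 0)); [|apply IHk; auto]. apply S_ext_in. intros w _.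
    destruct (list_eq_dec bool_dec w v) as [->|Hne];
    destruct b; repeat (destruct (list_eq_dec bool_dec _ _)); try congruence; try lia.
Qed.

Lemma S_words_snoc k g : S_ (words (S k)) g = S_ (words k) (fun w => g (w ++ [true]) + g (w ++ [false])).
Proof.
  replace (S k) with (k + 1) by lia. rewrite S_words_app. apply S_ext_in. intros w _.
  unfold S_; simpl. lia.
Qed.

Open Scope nat_scope.

Definition step (h : Z) (b : bool) : Z := if b then (h + 1)%Z else (h - 1)%Z.
Fixpoint hend (h : Z) (p : list bool) : Z :=
  match p with [] => h | b :: p' => hend (step h b) p' end.
Definition VL (h : Z) (p : list bool) := h :: heights h p.
Definition mir (w : list bool) := rev (map negb w).

Lemma heights_app h a b : heights h (a ++ b) = heights h a ++ heights (hend h a) b.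
Proof. revert h; induction a as [|x a IH]; intro h; simpl; auto. rewrite IH. reflexivity. Qed.

Lemma hend_app h a b : hend h (a ++ b) = hend (hend h a) b.
Proof. revert h; induction a as [|x a IH]; intro h; simpl; auto. Qed.

Lemma VL_app h a b : VL h (a ++ b) = VL h a ++ heights (hend h a) b.
Proof. unfold VL. rewrite heights_app. reflexivity. Qed.

Lemma hend_mir h w : hend (hend h w) (mir w) = h.
Proof.
  revert h; induction w as [|b w IH]; intro h; simpl; auto.
  unfold mir; simpl. rewrite hend_app. fold (mir w). rewrite IH.
  destruct b; simpl; lia.
Qed.

Lemma VL_mir h w : VL (hend h w) (mir w) = rev (VL h w).
Proof.
  revert h; induction w as [|b w IH]; intro h; simpl; auto.
  unfold mir; simpl. fold (mir w). rewrite VL_app, IH, hend_mir.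
  unfold VL. simpl. unfold step. f_equal. f_equal. destruct b; simpl; f_equal; lia.
Qed.

Lemma last_VL h p d : last (VL h p) d = hend h p.
Proof.
  revert h; induction p as [|b p IH]; intro h; [reflexivity|].
  change (last (h :: VL (step h b) p) d = hend (step h b) p). rewrite <- IH.
  unfold VL. reflexivity.
Qed.

Lemma In_hend h p : In (hend h p) (VL h p).
Proof.
  revert h; induction p as [|b p IH]; intro h; simpl; auto.
  right. apply IH.
Qed.

Definition good (w : list bool) : bool := forallb (fun h => Z.leb 0 h) (VL 0 w).
Definition zc (w : list bool) : nat := count_occ Z.eq_dec (VL 0 w) 0%Z.

Lemma VL_mir_full w : VL 0 (w ++ mir w) = VL 0 w ++ tl (rev (VL 0 w)).
Proof. rewrite VL_app, <- VL_mir. reflexivity. Qed.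

Lemma in_tl_rev (l : list Z) x : In x (tl (rev l)) -> In x l.
Proof.
  intro H. apply (proj2 (in_rev l x)). destruct (rev l) as [|y r]; simpl in H; [destruct H|right; exact H].
Qed.

Lemma good_mir w : forallb (fun h => Z.leb 0 h) (vertex_heights (w ++ mir w)) = good w.
Proof.
  change (vertex_heights (w ++ mir w)) with (VL 0 (w ++ mir w)).
  rewrite VL_mir_full, forallb_app. unfold good.
  destruct (forallb _ (VL 0 w)) eqn:E; simpl; auto.
  apply forallb_forall. intros x Hx. rewrite forallb_forall in E. apply E.
  apply in_tl_rev. exact Hx.
Qed.

Lemma dyck_mir w : is_dyck (w ++ mir w) = good w.
Proof.
  unfold is_dyck. rewrite good_mir.
  change (vertex_heights (w ++ mir w)) with (VL 0 (w ++ mir w)).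
  rewrite last_VL, hend_app, hend_mir. simpl. apply andb_true_r.
Qed.

Lemma axis_mir w : axis_points (w ++ mir w) + (if Z.eq_dec (hend 0 w) 0 then 1 else 0) = 2 * zc w.
Proof.
  unfold axis_points. change (vertex_heights (w ++ mir w)) with (VL 0 (w ++ mir w)).
  rewrite VL_mir_full, count_occ_app. unfold zc.
  rewrite <- (count_occ_rev Z.eq_dec (VL 0 w)).
  rewrite <- VL_mir. unfold VL at 2 3. simpl tl.
  simpl. destruct (Z.eq_dec (hend 0 w) 0); lia.
Qed.

Lemma mir_length w : length (mir w) = length w.
Proof. unfold mir. rewrite length_rev, length_map. auto. Qed.

Open Scope nat_scope.

Lemma nth_mir w k : k < length w -> nth k (mir w) false = negb (nth (length w - 1 - k) w false).
Proof.
  intro Hk. unfold mir. rewrite rev_nth by (rewrite length_map; lia).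
  rewrite length_map. rewrite nth_indep with (d' := negb false) by (rewrite length_map; lia).
  rewrite map_nth. f_equal. f_equal. lia.
Qed.

Lemma symA n w : length w = n -> is_symmetric n (w ++ mir w) = true.
Proof.
  intro Hl. unfold is_symmetric. apply andb_true_intro. split.
  - apply Nat.eqb_eq. rewrite length_app, mir_length. lia.
  - apply forallb_forall. intros j Hj. apply in_seq in Hj.
    destruct (Nat.lt_ge_cases j n).
    + rewrite app_nth1 by lia. rewrite app_nth2 by lia.
      rewrite nth_mir by lia. rewrite negb_involutive.
      replace (length w - 1 - (2 * n - 1 - j - length w)) with j by lia.
      apply eqb_reflx.
    + rewrite app_nth2 by lia. rewrite app_nth1 by lia.
      rewrite nth_mir by lia.
      replace (length w - 1 - (j - length w)) with (2 * n - 1 - j) by lia.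
      apply eqb_reflx.
Qed.

Lemma symB n w1 w2 : length w1 = n -> length w2 = n -> is_symmetric n (w1 ++ w2) = true -> w2 = mir w1.
Proof.
  intros H1 H2 Hs. unfold is_symmetric in Hs. apply andb_prop in Hs. destruct Hs as [_ Hs].
  rewrite forallb_forall in Hs.
  apply nth_ext with (d := false) (d' := false). { rewrite mir_length; lia. }
  intros k Hk. specialize (Hs (n + k)). 
  assert (Hin : In (n + k) (seq 0 (2 * n))) by (apply in_seq; lia).
  specialize (Hs Hin). apply eqb_prop in Hs.
  rewrite app_nth2 in Hs by lia. rewrite app_nth1 in Hs by lia.
  replace (n + k - length w1) with k in Hs by lia. rewrite Hs.
  rewrite nth_mir by lia. f_equal. f_equal. lia.
Qed.

Definition cond n p := is_dyck p && is_symmetric n p.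

Lemma cond_mir n w : length w = n -> cond n (w ++ mir w) = good w.
Proof. intro H. unfold cond. rewrite dyck_mir, symA by auto. apply andb_true_r. Qed.

Lemma sum_sym n (f : list bool -> nat) :
  fold_right Nat.add 0 (map f (sym_dyck n)) = S_ (words n) (fun w => if good w then f (w ++ mir w) else 0).
Proof.
  unfold sym_dyck. rewrite S_filter. replace (2 * n) with (n + n) by lia.
  rewrite S_words_app. apply S_ext_in. intros w1 Hw1. apply words_length in Hw1.
  transitivity (S_ (words n) (fun w2 => if list_eq_dec bool_dec w2 (mir w1) then (if good w1 then f (w1 ++ mir w1) else 0) else 0)).
  - apply S_ext_in. intros w2 Hw2. apply words_length in Hw2.
    destruct (list_eq_dec bool_dec w2 (mir w1)) as [->|Hne].
    + fold (cond n (w1 ++ mir w1)). rewrite cond_mir by auto. reflexivity.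
    + destruct (is_dyck (w1 ++ w2) && is_symmetric n (w1 ++ w2)) eqn:E; auto.
      apply andb_prop in E. destruct E as [_ E]. exfalso. apply Hne. eapply symB; eauto.
  - apply S_words_single. rewrite mir_length. auto.
Qed.

Lemma T_eq n : T n = S_ (words n) (fun w => if good w then axis_points (w ++ mir w) else 0).
Proof. unfold T. apply sum_sym. Qed.

Lemma d_eq n : d n = S_ (words n) (fun w => if good w then 1 else 0).
Proof.
  unfold d. transitivity (fold_right Nat.add 0 (map (fun _ : list bool => 1) (sym_dyck n))).
  { induction (sym_dyck n) as [|a l IH]; simpl; lia. }
  apply sum_sym.
Qed.

Open Scope nat_scope.

Definition Nn n h := S_ (words n) (fun w => if good w && Z.eqb (hend 0 w) h then 1 else 0).
Definition Zn n h := S_ (words n) (fun w => if good w && Z.eqb (hend 0 w) h then zc w else 0).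
Definition Dn n := S_ (words n) (fun w => if good w then 1 else 0).
Definition Wn n := S_ (words n) (fun w => if good w then zc w else 0).

Lemma VL_snoc w b : VL 0 (w ++ [b]) = VL 0 w ++ [step (hend 0 w) b].
Proof. rewrite VL_app. reflexivity. Qed.

Lemma good_snoc w b : good (w ++ [b]) = good w && Z.leb 0 (step (hend 0 w) b).
Proof. unfold good. rewrite VL_snoc, forallb_app. simpl. rewrite andb_true_r. reflexivity. Qed.

Lemma hend_snoc w b : hend 0 (w ++ [b]) = step (hend 0 w) b.
Proof. rewrite hend_app. reflexivity. Qed.

Lemma zc_snoc w b : zc (w ++ [b]) = zc w + (if Z.eq_dec (step (hend 0 w) b) 0 then 1 else 0).
Proof. unfold zc. rewrite VL_snoc, count_occ_app. simpl. destruct (Z.eq_dec _ _); lia. Qed.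

Lemma good_hend w : good w = true -> (0 <= hend 0 w)%Z.
Proof.
  unfold good. intro H. rewrite forallb_forall in H. apply Z.leb_le. apply H. apply In_hend.
Qed.

Arguments zc : simpl never.
Ltac pw w :=
  rewrite ?good_snoc, ?hend_snoc, ?zc_snoc;
  let zz := fresh "zz" in try (remember (zc w) as zz);
  let G := fresh "G" in
  destruct (good w) eqn:G; simpl; [pose proof (good_hend w G)|];
  unfold step;
  repeat (match goal with |- context [Z.eqb ?a ?b] => destruct (Z.eqb_spec a b)
    | |- context [Z.leb ?a ?b] => destruct (Z.leb_spec a b)
    | |- context [Z.eq_dec ?a ?b] => destruct (Z.eq_dec a b) end; simpl);
  try lia.

Lemma NN_rec n h : (-1 <= h)%Z -> Nn (S n) (h + 1) = Nn n h + Nn n (h + 2).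
Proof.
  intro Hh. unfold Nn. rewrite S_words_snoc, <- S_add. apply S_ext_in. intros w _. pw w.
Qed.

Lemma ZZ_rec n h : (-1 <= h)%Z ->
  Zn (S n) (h + 1) = Zn n h + Zn n (h + 2) + (if Z.eq_dec (h + 1) 0 then Nn (S n) 0 else 0).
Proof.
  intro Hh. destruct (Z.eq_dec (h + 1) 0) as [E|E].
  - unfold Zn, Nn. rewrite !S_words_snoc, <- !S_add. apply S_ext_in. intros w _. pw w.
  - unfold Zn. rewrite S_words_snoc, <- !S_add, Nat.add_0_r. apply S_ext_in. intros w _. pw w.
Qed.

Lemma D_rec n : Dn (S n) + Nn n 0 = 2 * Dn n.
Proof.
  unfold Dn, Nn. rewrite S_words_snoc, <- S_mul, <- S_add. apply S_ext_in. intros w _. pw w.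
Qed.

Lemma W_rec n : Wn (S n) + Zn n 0 = 2 * Wn n + Nn n 1.
Proof.
  unfold Wn, Zn, Nn. rewrite S_words_snoc, <- S_mul, <- !S_add. apply S_ext_in. intros w _. pw w.
Qed.

Lemma T_rec n : T n + Nn n 0 = 2 * Wn n.
Proof.
  rewrite T_eq. unfold Wn, Nn. rewrite <- S_mul, <- !S_add. apply S_ext_in. intros w _.
  pose proof (axis_mir w). remember (zc w) as zz. remember (axis_points (w ++ mir w)) as ax.
  destruct (good w) eqn:G; simpl; [|lia].
  destruct (Z.eqb_spec (hend 0 w) 0); destruct (Z.eq_dec (hend 0 w) 0); lia.
Qed.

Lemma d_D n : d n = Dn n.
Proof. apply d_eq. Qed.

Lemma Nn_neg n h : (h < 0)%Z -> Nn n h = 0.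
Proof.
  intro Hh. unfold Nn. transitivity (S_ (words n) (fun _ => 0)).
  - apply S_ext_in. intros w _. destruct (good w) eqn:G; simpl; auto.
    pose proof (good_hend w G). destruct (Z.eqb_spec (hend 0 w) h); lia.
  - induction (words n); unfold S_ in *; simpl; auto.
Qed.

Lemma Zn_neg n h : (h < 0)%Z -> Zn n h = 0.
Proof.
  intro Hh. unfold Zn. transitivity (S_ (words n) (fun _ => 0)).
  - apply S_ext_in. intros w _. destruct (good w) eqn:G; simpl; auto.
    pose proof (good_hend w G). destruct (Z.eqb_spec (hend 0 w) h); lia.
  - induction (words n); unfold S_ in *; simpl; auto.
Qed.

Lemma Nn0 h : Nn 0 h = if Z.eqb 0 h then 1 else 0.
Proof. unfold Nn, S_. simpl. destruct h; reflexivity. Qed.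
Lemma Zn0 h : Zn 0 h = if Z.eqb 0 h then 1 else 0.
Proof. unfold Zn, S_. simpl. destruct h; reflexivity. Qed.
Lemma Dn0 : Dn 0 = 1. Proof. reflexivity. Qed.
Lemma Wn0 : Wn 0 = 1. Proof. reflexivity. Qed.

Open Scope Z_scope.

Fixpoint M (n : nat) (h : Z) : Z :=
  match n with O => if Z.eqb h 0 then 1 else 0 | S n' => M n' (h - 1) + M n' (h + 1) end.

Lemma M_sym n h : M n (- h) = M n h.
Proof.
  revert h; induction n as [|n IH]; intro h; simpl.
  - destruct (Z.eqb_spec (-h) 0); destruct (Z.eqb_spec h 0); lia.
  - replace (- h - 1) with (- (h + 1)) by lia. replace (- h + 1) with (- (h - 1)) by lia.
    rewrite !IH. lia.
Qed.

Lemma M_big n h : Z.of_nat n < h -> M n h = 0.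
Proof.
  revert h; induction n as [|n IH]; intros h Hh; simpl.
  - destruct (Z.eqb_spec h 0); lia.
  - rewrite !IH by lia. reflexivity.
Qed.

Lemma M_par n h : Z.odd (Z.of_nat n + h) = true -> M n h = 0.
Proof.
  revert h; induction n as [|n IH]; intros h Hh; simpl.
  - destruct (Z.eqb_spec h 0); auto. subst. discriminate.
  - rewrite !IH. reflexivity.
    + replace (Z.of_nat n + (h + 1)) with (Z.of_nat (S n) + h) by lia. exact Hh.
    + replace (Z.of_nat (S n) + h) with (Z.of_nat n + (h - 1) + 2) in Hh by lia.
      rewrite Z.odd_add in Hh. simpl in Hh. rewrite xorb_false_r in Hh. exact Hh.
Qed.

Lemma binom_0_r n : binom n 0 = 1%nat.
Proof. destruct n; reflexivity. Qed.

Lemma M_binom n k : M n (Z.of_nat n - 2 * Z.of_nat k) = Z.of_nat (binom n k).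
Proof.
  revert k; induction n as [|n IH]; intro k.
  - destruct k; [reflexivity|]. cbn [M binom]. destruct (Z.eqb_spec (Z.of_nat 0 - 2 * Z.of_nat (S k)) 0); [lia|reflexivity].
  - cbn [M]. destruct k as [|k].
    + rewrite binom_0_r. replace (Z.of_nat (S n) - 2 * Z.of_nat 0 - 1) with (Z.of_nat n - 2 * Z.of_nat 0) by lia.
      rewrite IH, binom_0_r. rewrite M_big by lia. reflexivity.
    + replace (Z.of_nat (S n) - 2 * Z.of_nat (S k) - 1) with (Z.of_nat n - 2 * Z.of_nat (S k)) by lia.
      replace (Z.of_nat (S n) - 2 * Z.of_nat (S k) + 1) with (Z.of_nat n - 2 * Z.of_nat k) by lia.
      rewrite !IH. cbn [binom]. lia.
Qed.

Lemma N_M n h : 0 <= h -> Z.of_nat (Nn n h) = M n h - M n (h + 2).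
Proof.
  revert h; induction n as [|n IH]; intros h Hh.
  - rewrite Nn0. cbn [M]. destruct (Z.eqb_spec 0 h); destruct (Z.eqb_spec h 0); destruct (Z.eqb_spec (h+2) 0); lia.
  - replace h with ((h - 1) + 1) at 1 by lia. rewrite NN_rec by lia. rewrite Nat2Z.inj_add.
    simpl. replace (h - 1 + 2) with (h + 1) by lia. replace (h + 2 - 1) with (h + 1) by lia.
    destruct (Z.eq_dec h 0) as [->|Hne].
    + rewrite Nn_neg by lia. rewrite IH by lia. simpl.
      replace (M n (-1)) with (M n 1) by (rewrite <- (M_sym n 1); reflexivity). lia.
    + rewrite !IH by lia. replace (h - 1 + 2) with (h + 1) by lia.
      replace (h + 1 + 2) with (h + 2 + 1) by lia. lia.
Qed.

Lemma Z_N n h : 0 <= h -> Zn n h = Nn (S n) (h + 1).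
Proof.
  revert h; induction n as [|n IH]; intros h Hh.
  - rewrite Zn0. rewrite NN_rec by lia. rewrite !Nn0.
    destruct (Z.eqb_spec 0 h); destruct (Z.eqb_spec 0 (h + 2)); lia.
  - replace h with ((h - 1) + 1) at 1 by lia. rewrite ZZ_rec by lia.
    destruct (Z.eq_dec (h - 1 + 1) 0) as [E|E].
    + assert (h = 0) by lia. subst h.
      pose proof (NN_rec (S n) 0 ltac:(lia)) as R. pose proof (IH 1 ltac:(lia)) as I1.
      rewrite (Zn_neg n (0-1)) by lia. simpl in *. lia.
    + pose proof (NN_rec (S n) h ltac:(lia)) as R.
      pose proof (IH (h - 1) ltac:(lia)) as I1. pose proof (IH (h + 1) ltac:(lia)) as I2.
      replace (h - 1 + 1) with h in * by lia. replace (h - 1 + 2) with (h + 1) by lia.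
      replace (h + 1 + 1) with (h + 2) in * by lia. lia.
Qed.

Open Scope Z_scope.

Lemma D_M n : Z.of_nat (Dn n) = M n 0 + M n 1.
Proof.
  induction n as [|n IH]; [reflexivity|].
  pose proof (D_rec n) as R. pose proof (N_M n 0 ltac:(lia)) as N0.
  apply (f_equal Z.of_nat) in R. rewrite Nat2Z.inj_add, Nat2Z.inj_mul in R.
  cbn [M]. replace (M n (0 - 1)) with (M n 1) by (rewrite <- (M_sym n 1); reflexivity).
  simpl (0 + 1). simpl (1 - 1). simpl (1 + 1). simpl (0 + 2) in N0. lia.
Qed.

Lemma W_D n : (Wn n + Nn (S n) 0 = Dn (S n))%nat.
Proof.
  induction n as [|n IH]; [reflexivity|].
  pose proof (W_rec n) as R1. pose proof (Z_N n 0 ltac:(lia)) as R2.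
  pose proof (D_rec (S n)) as R3. pose proof (NN_rec (S n) (-1) ltac:(lia)) as R4.
  pose proof (NN_rec n (-1) ltac:(lia)) as R5.
  rewrite (Nn_neg (S n) (-1)) in R4 by lia. rewrite (Nn_neg n (-1)) in R5 by lia.
  simpl in R2, R4, R5. lia.
Qed.

Lemma Mb n k h : h = Z.of_nat n - 2 * Z.of_nat k -> M n h = Z.of_nat (binom n k).
Proof. intros ->. apply M_binom. Qed.

Lemma M_odd n h j : Z.of_nat n + h = 2 * j + 1 -> M n h = 0.
Proof. intro H. apply M_par. rewrite H, Z.add_comm, Z.odd_add_mul_2. reflexivity. Qed.

Lemma T_even m : Z.of_nat (T (2 * m)) =
  2 * Z.of_nat (binom (2 * m + 1) m) - Z.of_nat (binom (2 * m) m) + Z.of_nat (binom (2 * m) (m + 1)).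
Proof.
  pose proof (T_rec (2 * m)) as R1. pose proof (W_D (2 * m)) as R2.
  pose proof (N_M (S (2 * m)) 0 ltac:(lia)) as R3. pose proof (D_M (S (2 * m))) as R4.
  pose proof (N_M (2 * m) 0 ltac:(lia)) as R5.
  rewrite (M_odd (S (2 * m)) 0 (Z.of_nat m)) in R3, R4 by lia.
  rewrite (M_odd (S (2 * m)) (0 + 2) (Z.of_nat m + 1)) in R3 by lia.
  rewrite (Mb (S (2 * m)) m 1) in R4 by lia.
  rewrite (Mb (2 * m) m 0) in R5 by lia.
  replace (0 + 2) with (- (-2)) in R5 by lia. rewrite M_sym in R5.
  rewrite (Mb (2 * m) (m + 1) (-2)) in R5 by lia.
  replace (S (2 * m)) with (2 * m + 1)%nat in * by lia.
  apply (f_equal Z.of_nat) in R1, R2. rewrite !Nat2Z.inj_add, Nat2Z.inj_mul in R1. rewrite !Nat2Z.inj_add in R2.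
  lia.
Qed.

Lemma T_odd m : Z.of_nat (T (2 * m + 1)) = 2 * Z.of_nat (binom (2 * m + 2) m).
Proof.
  pose proof (T_rec (2 * m + 1)) as R1. pose proof (W_D (2 * m + 1)) as R2.
  pose proof (N_M (2 * m + 1) 0 ltac:(lia)) as R3. pose proof (D_M (S (2 * m + 1))) as R4.
  pose proof (N_M (S (2 * m + 1)) 0 ltac:(lia)) as R5.
  rewrite (M_odd (2 * m + 1) 0 (Z.of_nat m)) in R3 by lia.
  rewrite (M_odd (2 * m + 1) (0 + 2) (Z.of_nat m + 1)) in R3 by lia.
  rewrite (M_odd (S (2 * m + 1)) 1 (Z.of_nat m + 1)) in R4 by lia.
  rewrite (Mb (S (2 * m + 1)) (m + 1) 0) in R4, R5 by lia.
  rewrite (Mb (S (2 * m + 1)) m (0 + 2)) in R5 by lia.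
  replace (S (2 * m + 1)) with (2 * m + 2)%nat in * by lia.
  apply (f_equal Z.of_nat) in R1, R2. rewrite !Nat2Z.inj_add, Nat2Z.inj_mul in R1. rewrite !Nat2Z.inj_add in R2.
  lia.
Qed.

Lemma d_even m : Z.of_nat (d (2 * m)) = Z.of_nat (binom (2 * m) m).
Proof.
  rewrite d_D, D_M. rewrite (M_odd (2 * m) 1 (Z.of_nat m)) by lia.
  rewrite (Mb (2 * m) m 0) by lia. lia.
Qed.

Lemma d_odd m : Z.of_nat (d (2 * m + 1)) = Z.of_nat (binom (2 * m + 1) m).
Proof.
  rewrite d_D, D_M. rewrite (M_odd (2 * m + 1) 0 (Z.of_nat m)) by lia.
  rewrite (Mb (2 * m + 1) m 1) by lia. lia.
Qed.

Lemma T_small : (T 0 = 1 /\ T 1 = 2 /\ T 2 = 5 /\ T 3 = 8 /\ T 4 = 18 /\ T 5 = 30 /\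
   T 6 = 65 /\ T 7 = 112)%nat.
Proof. vm_compute. repeat split. Qed.

Open Scope R_scope.

Lemma binom_1_r n : binom n 1 = n.
Proof. induction n as [|n IH]; simpl; auto. rewrite binom_0_r, IH. lia. Qed.

Lemma binom_big n k : (n < k)%nat -> binom n k = 0%nat.
Proof.
  revert k; induction n as [|n IH]; intros k Hk; destruct k as [|k]; try lia; simpl; auto.
  rewrite !IH by lia. auto.
Qed.

Lemma binom_pos n k : (k <= n)%nat -> (0 < binom n k)%nat.
Proof.
  revert k; induction n as [|n IH]; intros k Hk; destruct k as [|k]; simpl; try lia.
  specialize (IH k ltac:(lia)). lia.
Qed.

Lemma absorb n k : (S k * binom (S n) (S k) = S n * binom n k)%nat.
Proof.
  revert k; induction n as [|n IH]; intro k.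
  - destruct k as [|k]; simpl; lia.
  - destruct k as [|k].
    + change (binom (S (S n)) 1) with (binom (S n) 0 + binom (S n) 1)%nat.
      rewrite !binom_0_r, binom_1_r. lia.
    + change (binom (S (S n)) (S (S k))) with (binom (S n) (S k) + binom (S n) (S (S k)))%nat.
      pose proof (IH k) as H1. pose proof (IH (S k)) as H2.
      assert (HA : binom (S n) (S k) = (binom n k + binom n (S k))%nat) by reflexivity.
      remember (binom (S n) (S k)) as A. remember (binom (S n) (S (S k))) as B.
      remember (binom n k) as a. remember (binom n (S k)) as a'.
      rewrite HA at 2. nia.
Qed.

Lemma absorb2 n k : (k <= n)%nat -> (S k * binom n (S k) = (n - k) * binom n k)%nat.
Proof.
  intro Hk. pose proof (absorb n k) as H.
  change (binom (S n) (S k)) with (binom n k + binom n (S k))%nat in H.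
  replace n with (k + (n - k))%nat in H at 3 by lia. nia.
Qed.

Definition bb (m : nat) : R := INR (binom (2 * m) m).

Lemma bb_pos m : 0 < bb m.
Proof. unfold bb. apply lt_0_INR. apply binom_pos. lia. Qed.

Lemma E1 m : (INR m + 1) * INR (binom (2 * m) (m + 1)) = INR m * bb m.
Proof.
  unfold bb. pose proof (absorb2 (2 * m) m ltac:(lia)) as H.
  replace (m + 1)%nat with (S m) by lia. replace (2 * m - m)%nat with m in H by lia.
  apply (f_equal INR) in H. rewrite !mult_INR, S_INR in H. lra.
Qed.

Lemma E2 m : INR (binom (2 * m + 1) m) = bb m + INR (binom (2 * m) (m + 1)).
Proof.
  unfold bb. pose proof (absorb2 (2 * m + 1) m ltac:(lia)) as H.
  replace (2 * m + 1 - m)%nat with (S m) in H by lia.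
  replace (m + 1)%nat with (S m) by lia. replace (2 * m + 1)%nat with (S (2 * m)) in * by lia.
  change (binom (S (2 * m)) (S m)) with (binom (2 * m) m + binom (2 * m) (S m))%nat in H.
  apply (f_equal INR) in H. rewrite !mult_INR, !plus_INR in H.
  rewrite S_INR in H. pose proof (pos_INR m). nra.
Qed.

Lemma E3 m : bb (S m) = 2 * INR (binom (2 * m + 1) m).
Proof.
  unfold bb. replace (2 * S m)%nat with (S (S (2 * m))) by lia.
  change (binom (S (S (2 * m))) (S m)) with (binom (S (2 * m)) m + binom (S (2 * m)) (S m))%nat.
  pose proof (absorb2 (2 * m + 1) m ltac:(lia)) as H.
  replace (2 * m + 1 - m)%nat with (S m) in H by lia.
  replace (2 * m + 1)%nat with (S (2 * m)) in * by lia.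
  apply (f_equal INR) in H. rewrite !mult_INR in H. rewrite plus_INR.
  pose proof (pos_INR m). rewrite S_INR in H. nra.
Qed.

Lemma E4 m : (INR m + 1) * bb (S m) = (INR m + 2) * INR (binom (2 * m + 2) m).
Proof.
  unfold bb. pose proof (absorb2 (2 * m + 2) m ltac:(lia)) as H.
  replace (2 * m + 2 - m)%nat with (S (S m)) in H by lia.
  replace (2 * S m)%nat with (2 * m + 2)%nat by lia.
  apply (f_equal INR) in H. rewrite !mult_INR, !S_INR in H. lra.
Qed.

Lemma bb_rec m : (INR m + 1) * bb (S m) = 2 * (2 * INR m + 1) * bb m.
Proof.
  rewrite E3, E2. pose proof (E1 m). lra.
Qed.

Lemma T_even_R m : INR (T (2 * m)) = bb m * (4 * INR m + 1) / (INR m + 1).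
Proof.
  rewrite INR_IZR_INZ, T_even, plus_IZR, minus_IZR, mult_IZR, <- !INR_IZR_INZ.
  rewrite E2. fold (bb m). pose proof (E1 m). pose proof (pos_INR m).
  replace (INR (binom (2 * m) (m + 1))) with (INR m * bb m / (INR m + 1)) by (rewrite <- H; field; lra). field. lra.
Qed.

Lemma T_odd_R m : INR (T (2 * m + 1)) = 2 * INR (binom (2 * m + 2) m).
Proof. rewrite INR_IZR_INZ, T_odd, mult_IZR, <- !INR_IZR_INZ. reflexivity. Qed.

Lemma d_even_R m : INR (d (2 * m)) = bb m.
Proof. rewrite INR_IZR_INZ, d_even, <- INR_IZR_INZ. reflexivity. Qed.

Lemma d_odd_R m : INR (d (2 * m + 1)) = INR (binom (2 * m + 1) m).
Proof. rewrite INR_IZR_INZ, d_odd, <- INR_IZR_INZ. reflexivity. Qed.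

Open Scope R_scope.

Lemma lim_inv_shift k : is_lim_seq (fun n => / (INR n + INR k)) 0.
Proof.
  assert (H : is_lim_seq (fun n => / INR n) 0).
  { replace (Finite 0) with (Rbar_inv p_infty) by reflexivity.
    apply is_lim_seq_inv; [apply is_lim_seq_INR| discriminate]. }
  apply (is_lim_seq_incr_n _ k) in H.
  eapply is_lim_seq_ext; [|exact H]. intro n. simpl. rewrite plus_INR. reflexivity.
Qed.

Lemma lim_4 c k : is_lim_seq (fun n => 4 - c / (INR n + INR k)) 4.
Proof.
  pose proof (is_lim_seq_scal_l _ (- c) _ (lim_inv_shift k)) as H. simpl in H.
  rewrite Rmult_0_r in H.
  pose proof (is_lim_seq_plus' _ _ _ _ (is_lim_seq_const 4) H) as H3.
  rewrite Rplus_0_r in H3.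
  eapply is_lim_seq_ext; [|exact H3]. intro n. simpl. unfold Rdiv. ring.
Qed.

Lemma even_ratio m :
     INR (T (2 * m)) / INR (d (2 * m))
       = (INR (binom (2 * m + 2) (m + 1)) - catalan m) / INR (binom (2 * m) m) /\
     INR (T (2 * m)) / INR (d (2 * m)) = (4 * INR m + 1) / (INR m + 1).
Proof.
  rewrite T_even_R, d_even_R. pose proof (bb_pos m). pose proof (pos_INR m).
  split.
  - replace (binom (2 * m + 2) (m + 1)) with (binom (2 * S m) (S m)) by (f_equal; lia).
    fold (bb (S m)). fold (bb m). unfold catalan. fold (bb m).
    replace (bb (S m)) with (2 * (2 * INR m + 1) * bb m / (INR m + 1)) by (rewrite <- bb_rec; field; lra).
    field. lra.
  - field. lra.
Qed.

Lemma odd_ratio m :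
     INR (T (2 * m + 1)) / INR (d (2 * m + 1))
       = 2 * INR (binom (2 * m + 2) m) / INR (binom (2 * m + 1) m) /\
     INR (T (2 * m + 1)) / INR (d (2 * m + 1)) = 4 * (INR m + 1) / (INR m + 2).
Proof.
  rewrite T_odd_R, d_odd_R. split; [reflexivity|].
  pose proof (E3 m). pose proof (E4 m). pose proof (bb_pos (S m)). pose proof (pos_INR m).
  replace (INR (binom (2 * m + 2) m)) with ((INR m + 1) * bb (S m) / (INR m + 2)) by (rewrite H0; field; lra).
  replace (INR (binom (2 * m + 1) m)) with (bb (S m) / 2) by lra.
  field. lra.
Qed.

Lemma even_lim : is_lim_seq (fun m => INR (T (2 * m)) / INR (d (2 * m))) 4.
Proof.
  eapply is_lim_seq_ext; [|apply (lim_4 3 1)]. intro n.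
  rewrite (proj2 (even_ratio n)). simpl. field. pose proof (pos_INR n). lra.
Qed.

Lemma odd_lim : is_lim_seq (fun m => INR (T (2 * m + 1)) / INR (d (2 * m + 1))) 4.
Proof.
  eapply is_lim_seq_ext; [|apply (lim_4 4 2)]. intro n.
  rewrite (proj2 (odd_ratio n)). simpl. field. pose proof (pos_INR n). lra.
Qed.

Open Scope R_scope.

Lemma bb0 : bb 0 = 1. Proof. reflexivity. Qed.
Lemma bb1 : bb 1 = 2. Proof. unfold bb. simpl. lra. Qed.

Lemma bb_ratio n : bb (S n) / bb n = 4 - 2 / (INR n + INR 1).
Proof.
  pose proof (bb_rec n). pose proof (bb_pos n). pose proof (pos_INR n). simpl INR.
  apply (Rmult_eq_reg_l (INR n + 1)); [|lra].
  unfold Rdiv. rewrite <- Rmult_assoc, H. field. lra.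
Qed.

Lemma CV_bb : CV_radius bb = Finite (/ 4).
Proof.
  rewrite (CV_radius_finite_DAlembert bb 4); auto.
  - intro n. pose proof (bb_pos n). lra.
  - lra.
  - eapply is_lim_seq_ext; [|apply (lim_4 2 1)]. intro n.
    pose proof (bb_pos n). pose proof (bb_pos (S n)).
    rewrite Rabs_pos_eq. rewrite bb_ratio. reflexivity.
    apply Rlt_le, Rdiv_lt_0_compat; auto.
Qed.

Lemma in_disk z : Rabs z < / 4 -> Rbar_lt (Rabs z) (CV_radius bb).
Proof. intro H. rewrite CV_bb. exact H. Qed.

Lemma ode z : Rabs z < / 4 ->
  (1 - 4 * z) * PSeries (PS_derive bb) z = 2 * PSeries bb z.
Proof.
  intro Hz. pose proof (in_disk z Hz) as Hd.
  pose proof (ex_pseries_derive bb z Hd) as ED.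
  rewrite Rmult_minus_distr_r, Rmult_1_l, Rmult_assoc, <- PSeries_incr_1.
  rewrite <- PSeries_scal.
  rewrite <- PSeries_minus.
  2: exact ED.
  2: { apply ex_pseries_scal. apply Rmult_comm. apply ex_pseries_incr_1. exact ED. }
  rewrite <- PSeries_scal. apply PSeries_ext. intro n.
  unfold PS_minus, PS_scal, PS_incr_1, PS_derive. simpl. unfold plus, opp, scal; simpl.
  unfold mult; simpl.
  destruct n as [|n].
  - rewrite bb1, bb0. simpl. unfold zero; simpl. lra.
  - pose proof (bb_rec (S n)). rewrite !S_INR in *. change (match n with 0%nat => 1 | S _ => INR n + 1 end) with (INR (S n)). rewrite S_INR. lra.
Qed.

Definition gB z := PSeries bb z * sqrt (1 - 4 * z).

Lemma gB_derive z : Rabs z < / 4 -> is_derive gB z 0.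
Proof.
  intro Hz. pose proof (Rabs_def2 _ _ Hz) as [Hz1 Hz2].
  assert (Hp : 0 < 1 - 4 * z) by lra.
  pose proof (is_derive_PSeries bb z (in_disk z Hz)) as D1.
  assert (D2 : is_derive (fun z => sqrt (1 - 4 * z)) z (-4 / (2 * sqrt (1 - 4 * z)))).
  { auto_derive. lra. unfold Rminus, Rdiv. ring. }
  pose proof (is_derive_mult _ _ _ _ _ D1 D2 ltac:(intros; apply Rmult_comm)) as D.
  unfold gB. replace 0 with (plus (mult (PSeries (PS_derive bb) z) (sqrt (1 - 4 * z)))
      (mult (PSeries bb z) (-4 / (2 * sqrt (1 - 4 * z))))). exact D.
  unfold plus, mult; simpl. pose proof (ode z Hz) as O.
  pose proof (sqrt_lt_R0 _ Hp) as Sp. pose proof (sqrt_sqrt _ (Rlt_le _ _ Hp)) as Ss.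
  set (s := sqrt (1 - 4 * z)) in *. set (f' := PSeries (PS_derive bb) z) in *.
  set (f := PSeries bb z) in *.
  replace (f' * s + f * (-4 / (2 * s))) with ((f' * (s * s) - 2 * f) / s) by (field; lra).
  rewrite Ss, (Rmult_comm f'), O. field. lra.
Qed.

Lemma B_val y : Rabs y < / 4 -> PSeries bb y = / sqrt (1 - 4 * y).
Proof.
  intro Hy. pose proof (Rabs_def2 _ _ Hy) as [Hy1 Hy2].
  assert (Hin : forall x, Rmin 0 y <= x <= Rmax 0 y -> Rabs x < / 4).
  { intros x Hx. apply Rabs_def1; unfold Rmin, Rmax in Hx; destruct (Rle_dec 0 y); lra. }
  destruct (MVT_gen gB 0 y (fun _ => 0)) as [c [_ Hc]].
  - intros x Hx. apply gB_derive. apply Hin. lra.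
  - intros x Hx. apply continuity_pt_filterlim.
    exact (@ex_derive_continuous R_AbsRing R_NormedModule gB x (ex_intro _ 0 (gB_derive x (Hin x Hx)))).
  - unfold gB in Hc. rewrite PSeries_0, bb0 in Hc.
    replace (1 - 4 * 0) with 1 in Hc by ring. rewrite sqrt_1 in Hc.
    assert (Hp : 0 < 1 - 4 * y) by lra. pose proof (sqrt_lt_R0 _ Hp).
    apply (Rmult_eq_reg_r (sqrt (1 - 4 * y))); [|lra]. field_simplify; lra.
Qed.

Lemma B_series y : Rabs y < / 4 -> is_series (fun n => bb n * y ^ n) (/ sqrt (1 - 4 * y)).
Proof.
  intro Hy. rewrite <- B_val by exact Hy. apply is_pseries_R. apply PSeries_correct.
  apply CV_radius_inside. apply in_disk. exact Hy.
Qed.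

Open Scope R_scope.

Lemma lim_even_odd (s : nat -> R) (L : R) :
  is_lim_seq (fun m => s (2 * m)%nat) L -> is_lim_seq (fun m => s (2 * m + 1)%nat) L -> is_lim_seq s L.
Proof.
  intros H1 H2. apply is_lim_seq_spec in H1, H2. apply is_lim_seq_spec. intro eps.
  destruct (H1 eps) as [N1 HN1]. destruct (H2 eps) as [N2 HN2].
  exists (2 * N1 + 2 * N2 + 1)%nat. intros n Hn.
  destruct (Nat.Even_or_Odd n) as [[k ->]|[k ->]].
  - apply HN1. lia.
  - apply HN2. lia.
Qed.

Lemma sum_interleave (u : nat -> R) m :
  sum_n u (2 * m + 1)%nat = sum_n (fun k => u (2 * k)%nat + u (2 * k + 1)%nat) m.
Proof.
  induction m as [|m IH].
  - simpl. rewrite sum_Sn, !sum_O. reflexivity.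
  - replace (2 * S m + 1)%nat with (S (S (2 * m + 1))) by lia.
    rewrite !sum_Sn, IH. unfold plus; simpl.
    replace (S (2 * m + 1)) with (2 * S m)%nat by lia.
    replace (S (S (2 * m + 1))) with (2 * S m + 1)%nat by lia. rewrite Rplus_assoc. f_equal. f_equal; f_equal; lia.
Qed.

Lemma interleave (u : nat -> R) E O :
  is_series (fun m => u (2 * m)%nat) E -> is_series (fun m => u (2 * m + 1)%nat) O -> is_series u (E + O).
Proof.
  intros HE HO.
  pose proof (is_series_plus _ _ _ _ HE HO) as HV. unfold plus in HV; simpl in HV.
  assert (Z0 : is_lim_seq (fun m => u (2 * m + 1)%nat) 0).
  { apply ex_series_lim_0. eexists. exact HO. }
  change (is_lim_seq (sum_n u) (E + O)).
  change (is_lim_seq (sum_n (fun k => u (2 * k)%nat + u (2 * k + 1)%nat)) (E + O)) in HV.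
  apply lim_even_odd.
  - replace (E + O) with ((E + O) - 0) by ring.
    apply (is_lim_seq_ext (fun m => sum_n (fun k => u (2 * k)%nat + u (2 * k + 1)%nat) m - u (2 * m + 1)%nat)).
    + intro m. rewrite <- sum_interleave. replace (2 * m + 1)%nat with (S (2 * m)) by lia.
      rewrite sum_Sn. unfold plus; simpl. ring.
    + apply is_lim_seq_minus'; assumption.
  - eapply is_lim_seq_ext; [|exact HV]. intro m. rewrite sum_interleave. reflexivity.
Qed.

Open Scope R_scope.

Lemma is_series_eq (a : nat -> R) (l l' : R) : is_series a l -> l = l' -> is_series a l'.
Proof. intros H ->. exact H. Qed.

Lemma S1 y : Rabs y < / 4 -> y <> 0 ->
  is_series (fun n => bb (S n) * y ^ n) (/ y * (/ sqrt (1 - 4 * y) - 1)).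
Proof.
  intros Hy H0. pose proof (B_series y Hy) as H.
  assert (H' : is_series (fun n => bb n * y ^ n) (plus (/ sqrt (1 - 4 * y) - 1) (bb 0 * y ^ 0))).
  { eapply is_series_eq; [exact H|]. rewrite bb0. unfold plus; simpl. ring. }
  pose proof (is_series_incr_1 (fun n => bb n * y ^ n) _ H') as H2.
  apply (is_series_scal (/ y)) in H2.
  eapply is_series_ext; [|exact H2]. intro n. unfold scal; simpl. unfold mult; simpl.
  field. exact H0.
Qed.

Lemma S2 y : Rabs y < / 4 -> y <> 0 ->
  is_series (fun n => bb (S (S n)) * y ^ n) (/ y * (/ y * (/ sqrt (1 - 4 * y) - 1) - 2)).
Proof.
  intros Hy H0. pose proof (S1 y Hy H0) as H.
  assert (H' : is_series (fun n => bb (S n) * y ^ n) (plus (/ y * (/ sqrt (1 - 4 * y) - 1) - 2) (bb 1 * y ^ 0))).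
  { eapply is_series_eq; [exact H|]. rewrite bb1. unfold plus; simpl. ring. }
  pose proof (is_series_incr_1 (fun n => bb (S n) * y ^ n) _ H') as H2.
  apply (is_series_scal (/ y)) in H2.
  eapply is_series_ext; [|exact H2]. intro n. unfold scal; simpl. unfold mult; simpl.
  field. exact H0.
Qed.

Lemma T_even_bb m : INR (T (2 * m)) = 3 / 2 * bb (S m) - 2 * bb m.
Proof.
  rewrite T_even_R. pose proof (bb_rec m). pose proof (pos_INR m).
  replace (bb (S m)) with (2 * (2 * INR m + 1) * bb m / (INR m + 1)) by (rewrite <- H; field; lra).
  field. lra.
Qed.

Lemma T_odd_bb m : INR (T (2 * m + 1)) = bb (S (S m)) - 2 * bb (S m).
Proof.
  rewrite T_odd_R. pose proof (bb_rec (S m)). pose proof (E4 m). pose proof (pos_INR m).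
  rewrite S_INR in H.
  replace (INR (binom (2 * m + 2) m)) with ((INR m + 1) * bb (S m) / (INR m + 2)) by (rewrite H0; field; lra).
  replace (bb (S (S m))) with (2 * (2 * (INR m + 1) + 1) * bb (S m) / (INR m + 1 + 1)) by (rewrite <- H; field; lra).
  field. lra.
Qed.

Lemma even_series x : x <> 0 -> Rabs x < 1 / 2 ->
  is_series (fun m => INR (T (2 * m)) * x ^ (2 * m))
    (3 / 2 * (/ (x ^ 2) * (/ sqrt (1 - 4 * x ^ 2) - 1)) - 2 * / sqrt (1 - 4 * x ^ 2)).
Proof.
  intros Hx Hx2. set (y := x ^ 2).
  assert (Hy : Rabs y < / 4).
  { unfold y. rewrite <- RPow_abs. pose proof (Rabs_pos x). simpl. nra. }
  assert (H0 : y <> 0) by (unfold y; apply pow_nonzero; exact Hx).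
  pose proof (is_series_scal (3 / 2) _ _ (S1 y Hy H0)) as A.
  pose proof (is_series_scal (- 2) _ _ (B_series y Hy)) as B.
  pose proof (is_series_plus _ _ _ _ A B) as C.
  eapply is_series_ext; [|eapply is_series_eq; [exact C|]].
  - intro n. rewrite T_even_bb, pow_mult. fold y. unfold plus, scal; simpl; unfold mult; simpl. ring.
  - unfold plus, scal; simpl; unfold mult; simpl. ring.
Qed.

Lemma odd_series x : x <> 0 -> Rabs x < 1 / 2 ->
  is_series (fun m => INR (T (2 * m + 1)) * x ^ (2 * m + 1))
    (x * (/ (x ^ 2) * (/ (x ^ 2) * (/ sqrt (1 - 4 * x ^ 2) - 1) - 2) - 2 * (/ (x ^ 2) * (/ sqrt (1 - 4 * x ^ 2) - 1)))).
Proof.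
  intros Hx Hx2. set (y := x ^ 2).
  assert (Hy : Rabs y < / 4).
  { unfold y. rewrite <- RPow_abs. pose proof (Rabs_pos x). simpl. nra. }
  assert (H0 : y <> 0) by (unfold y; apply pow_nonzero; exact Hx).
  pose proof (is_series_scal (- 2) _ _ (S1 y Hy H0)) as B.
  pose proof (is_series_plus _ _ _ _ (S2 y Hy H0) B) as C.
  pose proof (is_series_scal x _ _ C) as D.
  eapply is_series_ext; [|eapply is_series_eq; [exact D|]].
  - intro n. rewrite T_odd_bb, pow_add, pow_mult. fold y. unfold plus, scal; simpl; unfold mult; simpl. ring.
  - unfold plus, scal; simpl; unfold mult; simpl. ring.
Qed.

Open Scope R_scope.

Lemma alg_even y s : 0 < s -> s * s = 1 - 4 * y -> y <> 0 ->
  3 / 2 * (/ y * (/ s - 1)) - 2 * / s = (1 - s) / (2 * y) * (2 * (1 / s) - 1).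
Proof.
  intros Hs Hss Hy. replace y with ((1 - s * s) / 4) in * by lra.
  assert (1 - s * s <> 0) by (intro; apply Hy; lra).
  field. split; lra.
Qed.

Lemma alg_odd x y s : 0 < s -> s * s = 1 - 4 * y -> y <> 0 ->
  x * (/ y * (/ y * (/ s - 1) - 2) - 2 * (/ y * (/ s - 1))) = 2 * x * (1 / s) * ((1 - s) / (2 * y)) ^ 2.
Proof.
  intros Hs Hss Hy. replace y with ((1 - s * s) / 4) in * by lra.
  assert (1 - s * s <> 0) by (intro; apply Hy; lra).
  field. split; lra.
Qed.

Lemma setup x : x <> 0 -> Rabs x < 1 / 2 ->
  0 < sqrt (1 - 4 * x ^ 2) /\ sqrt (1 - 4 * x ^ 2) * sqrt (1 - 4 * x ^ 2) = 1 - 4 * x ^ 2 /\ x ^ 2 <> 0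
  /\ 0 < 1 + 2 * x /\ 0 < 1 - 2 * x.
Proof.
  intros Hx Hx2. pose proof (Rabs_def2 _ _ Hx2) as [H1 H2].
  assert (Hp : 0 < 1 - 4 * x ^ 2) by (simpl; nra).
  repeat split; try lra.
  - apply sqrt_lt_R0; exact Hp.
  - apply sqrt_sqrt; lra.
  - apply pow_nonzero; exact Hx.
Qed.

Lemma even_final x : x <> 0 -> Rabs x < 1 / 2 ->
  is_series (fun m => INR (T (2 * m)) * x ^ (2 * m)) (Cgf (x ^ 2) * (2 * Bgf (x ^ 2) - 1)).
Proof.
  intros Hx Hx2. eapply is_series_eq; [apply even_series; auto|].
  destruct (setup x Hx Hx2) as [Hs [Hss [Hy _]]].
  unfold Cgf, Bgf. apply alg_even; auto.
Qed.

Lemma odd_final x : x <> 0 -> Rabs x < 1 / 2 ->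
  is_series (fun m => INR (T (2 * m + 1)) * x ^ (2 * m + 1)) (2 * x * Bgf (x ^ 2) * Cgf (x ^ 2) ^ 2).
Proof.
  intros Hx Hx2. eapply is_series_eq; [apply odd_series; auto|].
  destruct (setup x Hx Hx2) as [Hs [Hss [Hy _]]].
  unfold Cgf, Bgf. apply alg_odd; auto.
Qed.

Lemma full_final x : x <> 0 -> Rabs x < 1 / 2 ->
  is_series (fun n => INR (T n) * x ^ n)
       (2 * Cgf (x ^ 2) * (1 / (2 * x) * (sqrt ((1 + 2 * x) / (1 - 2 * x)) - 1))
        - Cgf (x ^ 2)).
Proof.
  intros Hx Hx2.
  pose proof (interleave (fun n => INR (T n) * x ^ n) _ _ (even_final x Hx Hx2) (odd_final x Hx Hx2)) as H.
  eapply is_series_eq; [exact H|].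
  destruct (setup x Hx Hx2) as [Hs [Hss [Hy [Hp Hm]]]].
  set (s := sqrt (1 - 4 * x ^ 2)) in *.
  assert (Hsq : sqrt ((1 + 2 * x) / (1 - 2 * x)) = (1 + 2 * x) / s).
  { replace ((1 + 2 * x) / (1 - 2 * x)) with (((1 + 2 * x) / s) ^ 2).
    - apply sqrt_pow2. apply Rlt_le, Rdiv_lt_0_compat; auto.
    - replace (((1 + 2 * x) / s) ^ 2) with ((1 + 2 * x) ^ 2 / (s * s)) by (field; lra).
      rewrite Hss. field. split; [lra|]. simpl. nra. }
  rewrite Hsq.
  assert (hC : 2 * x ^ 2 * Cgf (x ^ 2) = 1 - s).
  { unfold Cgf. fold s. field. exact Hx. }
  assert (hB : Bgf (x ^ 2) * s = 1).
  { unfold Bgf. fold s. field. lra. }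
  assert (hBs : (1 + 2 * x) / s = (1 + 2 * x) * Bgf (x ^ 2)).
  { unfold Bgf. fold s. field. lra. }
  rewrite hBs.
  set (C := Cgf (x ^ 2)) in *. set (B := Bgf (x ^ 2)) in *.
  assert (key : 2 * x ^ 2 * B * C ^ 2 = C * B - C).
  { replace (2 * x ^ 2 * B * C ^ 2) with (B * C * (2 * x ^ 2 * C)) by ring.
    rewrite hC. replace (B * C * (1 - s)) with (B * C - C * (B * s)) by ring. rewrite hB. ring. }
  assert (k2 : 2 * x * B * C ^ 2 = (C * B - C) / x).
  { rewrite <- key. field. exact Hx. }
  rewrite k2. clearbody C B s. field. exact Hx.
Qed.

Open Scope R_scope.

Theorem theorem4p5 :
  (* the full generating function, as a convergent power series on 0<|x|<1/2 *)
  (forall x : R, x <> 0 -> Rabs x < 1 / 2 ->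
     is_series (fun n => INR (T n) * x ^ n)
       (2 * Cgf (x ^ 2) * (1 / (2 * x) * (sqrt ((1 + 2 * x) / (1 - 2 * x)) - 1))
        - Cgf (x ^ 2))) /\
  (* its first coefficients *)
  (T 0 = 1 /\ T 1 = 2 /\ T 2 = 5 /\ T 3 = 8 /\ T 4 = 18 /\ T 5 = 30 /\
   T 6 = 65 /\ T 7 = 112)%nat /\
  (* even part *)
  (forall x : R, x <> 0 -> Rabs x < 1 / 2 ->
     is_series (fun m => INR (T (2 * m)) * x ^ (2 * m))
       (Cgf (x ^ 2) * (2 * Bgf (x ^ 2) - 1))) /\
  (forall m : nat,
     INR (T (2 * m)) / INR (d (2 * m))
       = (INR (binom (2 * m + 2) (m + 1)) - catalan m) / INR (binom (2 * m) m) /\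
     INR (T (2 * m)) / INR (d (2 * m)) = (4 * INR m + 1) / (INR m + 1)) /\
  is_lim_seq (fun m => INR (T (2 * m)) / INR (d (2 * m))) 4 /\
  (* odd part *)
  (forall x : R, x <> 0 -> Rabs x < 1 / 2 ->
     is_series (fun m => INR (T (2 * m + 1)) * x ^ (2 * m + 1))
       (2 * x * Bgf (x ^ 2) * Cgf (x ^ 2) ^ 2)) /\
  (forall m : nat,
     INR (T (2 * m + 1)) / INR (d (2 * m + 1))
       = 2 * INR (binom (2 * m + 2) m) / INR (binom (2 * m + 1) m) /\
     INR (T (2 * m + 1)) / INR (d (2 * m + 1)) = 4 * (INR m + 1) / (INR m + 2)) /\
  is_lim_seq (fun m => INR (T (2 * m + 1)) / INR (d (2 * m + 1))) 4.
Proof.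
  split; [exact full_final|].
  split; [exact T_small|].
  split; [exact even_final|].
  split; [exact even_ratio|].
  split; [exact even_lim|].
  split; [exact odd_final|].
  split; [exact odd_ratio|].
  exact odd_lim.
Qed.
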